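(* Let $\lambda^0$ be a constant fourth-order tensor on $\mathbb{R}^3$ with minor and major symmetries ($\lambda^0_{ijkl}=\lambda^0_{jikl}=\lambda^0_{ijlk}=\lambda^0_{klij}$) which is positive definite on symmetric matrices ($\xi:\lambda^0:\xi>0$ for every nonzero real symmetric $3\times3$ matrix $\xi$). For every $q\in\mathbb{R}^3$, the $3\times 3$ matrix $M(q)$ with entries $M_{jk}(q)=\sum_{i,l}\lambda^0_{ijkl}\big(\overline{D_i(q)}D_l(q)+D_i(q)\overline{D_l(q)}\big)$ is real, symmetric and positive semidefinite, and it is positive definite (hence invertible) if and only if $D(q)\neq 0$, i.e. if and only if $q\notin 2\pi\mathbb{Z}^3\cup\big((\pi,\pi,\pi)+2\pi\mathbb{Z}^3\big)$.
   Context: Let $T=\{\tfrac12(1,1,1),\ \tfrac12(1,-1,-1),\ \tfrac12(-1,1,-1),\ \tfrac12(-1,-1,1)\}$. For $q\in\mathbb{R}^3$, $D(q)\in\mathbb{C}^3$ is defined by $D_i(q)=\sum_{e\in T} e_i\, e^{i q\cdot e}$ ($i=1,2,3$). The overline denotes complex conjugation. (The matrix $M(q)$ is the inverse of the discrete displacement Green function $\Omega(q)$ of the tetrahedral scheme.) *)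

(* Defs.v *)
From HB Require Import structures.
From mathcomp Require Import all_boot all_order all_algebra.
From mathcomp Require Import complex.
From mathcomp Require Import reals trigo.
Set Implicit Arguments. Unset Strict Implicit. Unset Printing Implicit Defensive.
Import Order.TTheory GRing.Theory Num.Theory.
Local Open Scope ring_scope.
Local Open Scope complex_scope.

Section Defs.
Variable R : realType.

Definition vec3 (a b c : R) : 'rV[R]_3 := \row_(i < 3) nth 0 [:: a; b; c] i.

Definition tetraT : seq 'rV[R]_3 :=
  [:: (2^-1) *: vec3 1 1 1; (2^-1) *: vec3 1 (-1) (-1);
      (2^-1) *: vec3 (-1) 1 (-1); (2^-1) *: vec3 (-1) (-1) 1].

Definition dot3 (u v : 'rV[R]_3) : R := \sum_(i < 3) u 0 i * v 0 i.

Definition expi (t : R) : R[i] := cos t +i* sin t.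

Definition Dvec (q : 'rV[R]_3) : 'rV[R[i]]_3 :=
  \row_(i < 3) \sum_(e <- tetraT) (e 0 i)%:C * expi (dot3 q e).

Definition Mmat (lam : 'I_3 -> 'I_3 -> 'I_3 -> 'I_3 -> R) (q : 'rV[R]_3)
  : 'M[R[i]]_3 :=
  \matrix_(j < 3, k < 3) \sum_(i < 3) \sum_(l < 3)
     (lam i j k l)%:C * (((Dvec q 0 i)^* * Dvec q 0 l) + (Dvec q 0 i * (Dvec q 0 l)^*)).

Definition qform (A : 'M[R[i]]_3) (v : 'cV[R[i]]_3) : R[i] :=
  ((map_mx (@conjc R) v)^T *m A *m v) 0 0.

Definition psd_mx (A : 'M[R[i]]_3) : Prop := forall v, 0 <= qform A v.
Definition pd_mx (A : 'M[R[i]]_3) : Prop := forall v, v != 0 -> 0 < qform A v.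

Definition bad_q (q : 'rV[R]_3) : Prop :=
  (exists z : 'I_3 -> int, forall i, q 0 i = 2 * pi * (z i)%:~R) \/
  (exists z : 'I_3 -> int, forall i, q 0 i = pi + 2 * pi * (z i)%:~R).

End Defs.

(* Main.v *)
Require Import Defs.
From HB Require Import structures.
From mathcomp Require Import all_boot all_order all_algebra.
From mathcomp Require Import complex.
From mathcomp Require Import reals trigo interval_inference.
From mathcomp Require Import ring lra zify.
Import Order.TTheory GRing.Theory Num.Theory.
Set Implicit Arguments. Unset Strict Implicit.
Local Open Scope ring_scope.
Notation cRe := complex.Re.
Notation cIm := complex.Im.
Local Open Scope complex_scope.

Lemma cmulJ (R : realType) (z w : R[i]) :
  z^* * w + z * w^* = (2 * (cRe z * cRe w + cIm z * cIm w))%:C.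
Proof. by case: z w => a b [c d]; simpc; apply/eqP; rewrite eq_complex /=; apply/andP; split; apply/eqP; ring. Qed.

Lemma Re_sum (R : realType) n (F : 'I_n -> R[i]) : cRe (\sum_(i < n) F i) = \sum_(i < n) cRe (F i).
Proof. by elim/big_rec2: _ => // i x y _ <-; case: (F i) => a b; case: y. Qed.
Lemma Im_sum (R : realType) n (F : 'I_n -> R[i]) : cIm (\sum_(i < n) F i) = \sum_(i < n) cIm (F i).
Proof. by elim/big_rec2: _ => // i x y _ <-; case: (F i) => a b; case: y. Qed.

Lemma cterm (R : realType) (v w : R[i]) (m : R) :
  v^* * m%:C * w = (m * (cRe v * cRe w + cIm v * cIm w)) +i* (m * (cRe v * cIm w - cIm v * cRe w)).
Proof. case: v w => a b [c d]; simpc; apply/eqP; rewrite eq_complex /=; apply/andP; split; apply/eqP; ring. Qed.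

Definition expiD (R : realType) (x y : R) : expi (x + y) = expi x * expi y.
Proof. rewrite /expi; simpc. rewrite cosD sinD. apply/eqP; rewrite eq_complex /=; apply/andP; split; apply/eqP; ring. Qed.

Definition S4 (R : realType) (F : 'I_3 -> 'I_3 -> 'I_3 -> 'I_3 -> R) : R :=
  \sum_(i<3)\sum_(j<3)\sum_(k<3)\sum_(l<3) F i j k l.

Lemma S4_ext (R : realType) (F G : 'I_3 -> 'I_3 -> 'I_3 -> 'I_3 -> R) :
  (forall i j k l, F i j k l = G i j k l) -> S4 F = S4 G.
Proof.
move=> h; apply: eq_bigr => i _; apply: eq_bigr => j _; apply: eq_bigr => k _.
by apply: eq_bigr => l _.
Qed.

Lemma S4_add (R : realType) (F G : 'I_3 -> 'I_3 -> 'I_3 -> 'I_3 -> R) :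
  S4 (fun i j k l => F i j k l + G i j k l) = S4 F + S4 G.
Proof.
rewrite /S4 -big_split; apply: eq_bigr => i _; rewrite -big_split.
apply: eq_bigr => j _; rewrite -big_split; apply: eq_bigr => k _.
by rewrite -big_split.
Qed.

Lemma S4_swap12 (R : realType) (F : 'I_3 -> 'I_3 -> 'I_3 -> 'I_3 -> R) :
  S4 F = S4 (fun i j k l => F j i k l).
Proof. by rewrite /S4 exchange_big. Qed.

Lemma S4_swap34 (R : realType) (F : 'I_3 -> 'I_3 -> 'I_3 -> 'I_3 -> R) :
  S4 F = S4 (fun i j k l => F i j l k).
Proof.
apply: eq_bigr => i _; apply: eq_bigr => j _; by rewrite exchange_big.
Qed.

Definition PP (R : realType) (lam : 'I_3 -> 'I_3 -> 'I_3 -> 'I_3 -> R) (a x : 'I_3 -> R) :=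
  S4 (fun i j k l => lam i j k l * (a i * x j * x k * a l)).

Definition xim (R : realType) (a x : 'I_3 -> R) : 'M[R]_3 :=
  \matrix_(i < 3, j < 3) (a i * x j + x i * a j).

Lemma four_P (R : realType) (lam : 'I_3 -> 'I_3 -> 'I_3 -> 'I_3 -> R)
  (lam_sym1 : forall i j k l, lam i j k l = lam j i k l)
  (lam_sym2 : forall i j k l, lam i j k l = lam i j l k) a x :
  S4 (fun i j k l => xim a x i j * lam i j k l * xim a x k l) = 4 * PP lam a x.
Proof.
have T1 : S4 (fun i j k l => lam i j k l * (a i * x j * a k * x l)) = PP lam a x.
  rewrite S4_swap34; apply: S4_ext => i j k l; rewrite -lam_sym2; ring.
have T3 : S4 (fun i j k l => lam i j k l * (x i * a j * a k * x l)) = PP lam a x.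
  rewrite S4_swap12 -T1; apply: S4_ext => i j k l; rewrite -lam_sym1; ring.
have T4 : S4 (fun i j k l => lam i j k l * (x i * a j * x k * a l)) = PP lam a x.
  rewrite S4_swap12; apply: S4_ext => i j k l; rewrite -lam_sym1; ring.
rewrite (S4_ext (G := fun i j k l =>
   lam i j k l * (a i * x j * a k * x l) + lam i j k l * (a i * x j * x k * a l) +
   lam i j k l * (x i * a j * a k * x l) + lam i j k l * (x i * a j * x k * a l))); last first.
  by move=> i j k l; rewrite !mxE; ring.
rewrite !S4_add T1 T3 T4 -/(PP lam a x); ring.
Qed.

Lemma P_ge0 (R : realType) (lam : 'I_3 -> 'I_3 -> 'I_3 -> 'I_3 -> R)
  (lam_sym1 : forall i j k l, lam i j k l = lam j i k l)
  (lam_sym2 : forall i j k l, lam i j k l = lam i j l k)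
  (lam_pos : forall xi : 'M[R]_3, xi^T = xi -> xi != 0 ->
     0 < \sum_(i < 3) \sum_(j < 3) \sum_(k < 3) \sum_(l < 3)
           xi i j * lam i j k l * xi k l) a x :
  0 <= PP lam a x /\ ((exists i, a i != 0) -> (exists j, x j != 0) -> 0 < PP lam a x).
Proof.
have hT : (xim a x)^T = xim a x by apply/matrixP => i j; rewrite !mxE; ring.
have H := four_P lam_sym1 lam_sym2 a x.
have pos : xim a x != 0 -> 0 < PP lam a x.
  move=> nz; have := lam_pos _ hT nz; rewrite -/(S4 _) H; lra.
split.
  case: (eqVneq (xim a x) 0) => [z|nz]; last exact/ltW/pos.
  have : S4 (fun i j k l => xim a x i j * lam i j k l * xim a x k l) = 0.
    rewrite (S4_ext (G := fun _ _ _ _ => 0)); last by move=> i j k l; rewrite z !mxE !mul0r.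
    by rewrite /S4 big1 // => i _; rewrite big1 // => j _; rewrite big1 // => k _; rewrite big1.
  rewrite H; lra.
move=> [i ai] [j xj]; apply: pos; apply/eqP => /matrixP z.
have hii := z i i; rewrite !mxE in hii.
have xi0 : x i = 0.
  apply/eqP; move: hii; rewrite mulrC [x i * _]mulrC -mulr2n => /eqP.
  by rewrite mulrn_eq0 /= mulf_eq0 (negbTE ai).
have := z i j; rewrite !mxE xi0 mul0r addr0 => /eqP; rewrite mulf_eq0 (negbTE ai) /=.
by rewrite (negbTE xj).
Qed.
Local Open Scope complex_scope.

Definition aD (R : realType) (q : 'rV[R]_3) i := cRe (Dvec q 0 i).
Definition bD (R : realType) (q : 'rV[R]_3) i := cIm (Dvec q 0 i).
Definition mm (R : realType) (lam : 'I_3 -> 'I_3 -> 'I_3 -> 'I_3 -> R) q (j k : 'I_3) :=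
  \sum_(i < 3) \sum_(l < 3) lam i j k l * (2 * (aD q i * aD q l + bD q i * bD q l)).

Lemma Mmat_E (R : realType) lam (q : 'rV[R]_3) j k : Mmat lam q j k = (mm lam q j k)%:C.
Proof.
rewrite /Mmat mxE /mm. rewrite raddf_sum. apply: eq_bigr => i _; rewrite raddf_sum; apply: eq_bigr => l _.
rewrite cmulJ; apply/eqP; rewrite eq_complex /=; apply/andP; split; apply/eqP; rewrite /aD /bD; ring.
Qed.

Lemma mm_sym (R : realType) (lam : 'I_3 -> 'I_3 -> 'I_3 -> 'I_3 -> R)
  (lam_sym1 : forall i j k l, lam i j k l = lam j i k l)
  (lam_sym2 : forall i j k l, lam i j k l = lam i j l k)
  (lam_sym3 : forall i j k l, lam i j k l = lam k l i j) q j k :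
  mm lam q k j = mm lam q j k.
Proof.
rewrite /mm exchange_big; apply: eq_bigr => i _; apply: eq_bigr => l _.
rewrite lam_sym3 lam_sym1 lam_sym2; congr (_ * _); ring.
Qed.

Lemma qform_E (R : realType) (A : 'M[R[i]]_3) v :
  qform A v = \sum_(j < 3) \sum_(k < 3) (v j 0)^* * A j k * v k 0.
Proof.
rewrite /qform mxE exchange_big; apply: eq_bigr => k _; rewrite mxE mulr_suml.
by apply: eq_bigr => j _; rewrite !mxE.
Qed.

Definition Qm (R : realType) lam (q : 'rV[R]_3) (z : 'I_3 -> R) :=
  \sum_(j < 3) \sum_(k < 3) mm lam q j k * (z j * z k).

Lemma qform_M (R : realType) (lam : 'I_3 -> 'I_3 -> 'I_3 -> 'I_3 -> R)
  (lam_sym1 : forall i j k l, lam i j k l = lam j i k l)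
  (lam_sym2 : forall i j k l, lam i j k l = lam i j l k)
  (lam_sym3 : forall i j k l, lam i j k l = lam k l i j) q v :
  qform (Mmat lam q) v = (Qm lam q (fun j => cRe (v j 0)) + Qm lam q (fun j => cIm (v j 0))) +i* 0.
Proof.
rewrite qform_E.
apply/eqP; rewrite eq_complex /=; apply/andP; split; apply/eqP.
  rewrite Re_sum /Qm -big_split; apply: eq_bigr => j _; rewrite Re_sum -big_split.
  by apply: eq_bigr => k _; rewrite Mmat_E cterm /=; ring.
rewrite Im_sum (eq_bigr (fun j => \sum_(k < 3) (mm lam q j k * (cRe (v j 0) * cIm (v k 0))) -
    \sum_(k < 3) (mm lam q j k * (cIm (v j 0) * cRe (v k 0))))); last first.
  move=> j _; rewrite Im_sum -sumrB; apply: eq_bigr => k _.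
  by rewrite Mmat_E cterm /=; ring.
rewrite sumrB exchange_big /=; apply/eqP; rewrite subr_eq0; apply/eqP.
apply: eq_bigr => j _; apply: eq_bigr => k _.
by rewrite (mm_sym lam_sym1 lam_sym2 lam_sym3); ring.
Qed.

Lemma Qm_P (R : realType) lam (q : 'rV[R]_3) z :
  Qm lam q z = 2 * (PP lam (aD q) z + PP lam (bD q) z).
Proof.
rewrite /Qm.
rewrite (eq_bigr (fun j => \sum_(i < 3) \sum_(k < 3) \sum_(l < 3)
   lam i j k l * (2 * (aD q i * aD q l + bD q i * bD q l)) * (z j * z k))); last first.
  move=> j _; rewrite exchange_big; apply: eq_bigr => k _; rewrite /mm mulr_suml.
  by apply: eq_bigr => i _; rewrite mulr_suml.
rewrite exchange_big /= /PP -S4_add /S4 mulr_sumr; apply: eq_bigr => i _.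
rewrite mulr_sumr; apply: eq_bigr => j _; rewrite mulr_sumr; apply: eq_bigr => k _.
rewrite mulr_sumr; apply: eq_bigr => l _; ring.
Qed.

Close Scope complex_scope.

Lemma cRe_add (R : realType) (x y : R[i]) : cRe (x + y) = cRe x + cRe y.
Proof. by case: x y => a b [c d]. Qed.
Lemma cIm_add (R : realType) (x y : R[i]) : cIm (x + y) = cIm x + cIm y.
Proof. by case: x y => a b [c d]. Qed.
Lemma cRe_mul (R : realType) (r : R) (y : R[i]) : cRe (r%:C%C * y) = r * cRe y.
Proof. by case: y => c d /=; ring. Qed.
Lemma cIm_mul (R : realType) (r : R) (y : R[i]) : cIm (r%:C%C * y) = r * cIm y.
Proof. by case: y => c d /=; ring. Qed.

Lemma sum3 (R : realType) (F : 'I_3 -> R) : \sum_(i < 3) F i = F 0 + F 1 + F 2.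
Proof.
rewrite !big_ord_recr big_ord0 /= add0r.
by congr (F _ + F _ + F _); apply: val_inj.
Qed.

Lemma dot3E (R : realType) (q : 'rV[R]_3) (a b c : R) :
  dot3 q ((2^-1) *: vec3 a b c) = 2^-1 * (a * q 0 0 + b * q 0 1 + c * q 0 2).
Proof. rewrite /dot3 sum3 /vec3 !mxE /=; ring. Qed.

Lemma vec3E (R : realType) (a b c : R) (i : 'I_3) :
  ((2^-1) *: vec3 a b c) 0 i = 2^-1 * nth 0 [:: a; b; c] i.
Proof. by rewrite !mxE. Qed.

Lemma DRe (R : realType) (q : 'rV[R]_3) i : cRe (Dvec q 0 i) =
  \sum_(e <- tetraT R) e 0 i * cos (dot3 q e).
Proof.
rewrite mxE; elim: (tetraT R) => [|e s IH]; first by rewrite !big_nil.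
by rewrite !big_cons cRe_add cRe_mul IH.
Qed.
Lemma DIm (R : realType) (q : 'rV[R]_3) i : cIm (Dvec q 0 i) =
  \sum_(e <- tetraT R) e 0 i * sin (dot3 q e).
Proof.
rewrite mxE; elim: (tetraT R) => [|e s IH]; first by rewrite !big_nil.
by rewrite !big_cons cIm_add cIm_mul IH.
Qed.

Lemma D0_iff (R : realType) (q : 'rV[R]_3) :
  let C a b c := cos (2^-1 * (a * q 0 0 + b * q 0 1 + c * q 0 2)) in
  let S a b c := sin (2^-1 * (a * q 0 0 + b * q 0 1 + c * q 0 2)) in
  Dvec q = 0 <->
  (C 1 1 1 = C 1 (-1) (-1) /\ C 1 1 1 = C (-1) 1 (-1) /\ C 1 1 1 = C (-1) (-1) 1 /\
      S 1 1 1 = S 1 (-1) (-1) /\ S 1 1 1 = S (-1) 1 (-1) /\ S 1 1 1 = S (-1) (-1) 1).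
Proof.
move=> C S.
have hR : forall i, cRe (Dvec q 0 i) = 2^-1 * (nth 0 [:: 1; 1; 1] i * C 1 1 1 +
   nth 0 [:: 1; -1; -1] i * C 1 (-1) (-1) + nth 0 [:: -1; 1; -1] i * C (-1) 1 (-1) +
   nth 0 [:: -1; -1; 1] i * C (-1) (-1) 1).
  move=> i; rewrite DRe /tetraT !big_cons big_nil !vec3E !dot3E /C; ring.
have hI : forall i, cIm (Dvec q 0 i) = 2^-1 * (nth 0 [:: 1; 1; 1] i * S 1 1 1 +
   nth 0 [:: 1; -1; -1] i * S 1 (-1) (-1) + nth 0 [:: -1; 1; -1] i * S (-1) 1 (-1) +
   nth 0 [:: -1; -1; 1] i * S (-1) (-1) 1).
  move=> i; rewrite DIm /tetraT !big_cons big_nil !vec3E !dot3E /S; ring.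
split.
  move=> D0.
  have z : forall i, cRe (Dvec q 0 i) = 0 /\ cIm (Dvec q 0 i) = 0.
    by move=> i; rewrite D0 mxE.
  have [r0 i0] := z 0; have [r1 i1] := z 1; have [r2 i2] := z 2.
  rewrite hR /= in r0; rewrite hR /= in r1; rewrite hR /= in r2.
  rewrite hI /= in i0; rewrite hI /= in i1; rewrite hI /= in i2.
  by repeat split; lra.
case=> e1 [e2 [e3 [f1 [f2 f3]]]].
apply/matrixP => a i; rewrite (ord1 a) [RHS]mxE.
case: (Dvec q 0 i) (hR i) (hI i) => x y /= -> ->.
rewrite -e1 -e2 -e3 -f1 -f2 -f3.
apply/eqP; rewrite eq_complex /=; apply/andP; split; apply/eqP.
  by case: i => [[|[|[|]]]] //= _; ring.
by case: i => [[|[|[|]]]] //= _; ring.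
Qed.

Lemma cs_eq (R : realType) (x y : R) : (cos x = cos y /\ sin x = sin y) <-> cos (x - y) = 1.
Proof.
rewrite cosB; have hx := cos2Dsin2 x; have hy := cos2Dsin2 y.
split; first by case=> -> ->; rewrite -hy !expr2.
move=> h.
have e : (cos x - cos y) ^+ 2 + (sin x - sin y) ^+ 2 = 0.
  rewrite !sqrrB; lra.
have s1 := sqr_ge0 (cos x - cos y); have s2 := sqr_ge0 (sin x - sin y).
have e1 : (cos x - cos y) ^+ 2 = 0 by lra.
have e2 : (sin x - sin y) ^+ 2 = 0 by lra.
move: e1 e2 => /eqP; rewrite sqrf_eq0 subr_eq0 => /eqP -> /eqP; rewrite sqrf_eq0 subr_eq0 => /eqP ->; done.
Qed.

Lemma cos_per_nat (R : realType) (t : R) n : cos (t + 2 * pi * n%:R) = cos t /\ cos (t - 2 * pi * n%:R) = cos t.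
Proof.
elim: n => [|n [IH1 IH2]]; first by rewrite mulr0 addr0 subr0.
have e : 2 * pi * n.+1%:R = 2 * pi * n%:R + pi *+ 2 :> R by ring.
split; first by rewrite e addrA cosD2pi.
by rewrite -IH2 -(cosD2pi (t - 2 * pi * n.+1%:R)) e; congr cos; ring.
Qed.

Lemma cos_per (R : realType) (t : R) (z : int) : cos (t + 2 * pi * z%:~R) = cos t.
Proof.
case: z => n; first by rewrite (cos_per_nat t n).1.
by rewrite NegzE rmorphN /= mulrN -(cos_per_nat t n.+1).2.
Qed.

Lemma cos1P (R : realType) (t : R) : cos t = 1 <-> exists z : int, t = 2 * pi * z%:~R.
Proof.
split; last by case=> z ->; rewrite -(add0r (2 * pi * _)) cos_per cos0.
move=> ct.
have P0 : 0 < 2 * pi :> R by rewrite mulr_gt0 // pi_gt0.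
set n := Num.floor (t / (2 * pi)).
have /andP [h1 h2] := Num.Theory.floor_itv (t / (2 * pi)).
rewrite -/n rmorphD /= in h1 h2.
have ht : t / (2 * pi) * (2 * pi) = t by rewrite divfK // gt_eqF.
set N := (n%:~R : R) in h1 h2.
set y := t - 2 * pi * N.
have y0 : 0 <= y by rewrite /y; nra.
have y2 : y < 2 * pi by rewrite /y; nra.
have cy : cos y = 1.
  rewrite -ct; have := cos_per (t - 2 * pi * N) n; rewrite -/N subrK => ->; done.
exists n; apply/eqP; rewrite -subr_eq0 -/N -/y; apply/eqP.
have hpi := pi_gt0 R.
case: (lerP y pi) => ypi.
  apply: (@cos_inj R); rewrite ?in_itv /= ?y0 ?ypi ?lexx ?ltW //.
  by rewrite cy cos0.
exfalso.
have w0 : cos (2 * pi - y) = 1.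
  have := cos_per (- y) 1; rewrite cosN (_ : (1%:~R : R) = 1) // mulr1 addrC => ->; exact: cy.
have : 2 * pi - y = 0.
  apply: (@cos_inj R); rewrite ?in_itv /= ?lexx ?ltW //; try lra.
  by rewrite w0 cos0.
lra.
Qed.

Lemma Dzero_cos (R : realType) (q : 'rV[R]_3) : Dvec q = 0 <->
  (cos (q 0 1 + q 0 2) = 1 /\ cos (q 0 0 + q 0 2) = 1 /\ cos (q 0 0 + q 0 1) = 1).
Proof.
have := D0_iff q => /= ->.
set T := fun a b c : R => 2^-1 * (a * q 0 0 + b * q 0 1 + c * q 0 2).
have h := fun a b c => cs_eq (T 1 1 1) (T a b c).
have e1 : T 1 1 1 - T 1 (-1) (-1) = q 0 1 + q 0 2 by rewrite /T; field.
have e2 : T 1 1 1 - T (-1) 1 (-1) = q 0 0 + q 0 2 by rewrite /T; field.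
have e3 : T 1 1 1 - T (-1) (-1) 1 = q 0 0 + q 0 1 by rewrite /T; field.
have h1 := h 1 (-1) (-1); have h2 := h (-1) 1 (-1); have h3 := h (-1) (-1) 1.
rewrite e1 in h1; rewrite e2 in h2; rewrite e3 in h3.
rewrite /T in h1 h2 h3.
rewrite -h1 -h2 -h3; tauto.
Qed.

Lemma ord3 (i : 'I_3) : i = 0 \/ i = 1 \/ i = 2.
Proof.
case: i => [[|[|[|//]]]] p; [left|right;left|right;right]; exact: val_inj.
Qed.

Lemma int_part (R : realType) (q : 'rV[R]_3) :
  ((exists a : int, q 0 1 + q 0 2 = 2 * pi * a%:~R) /\
   (exists b : int, q 0 0 + q 0 2 = 2 * pi * b%:~R) /\
   (exists c : int, q 0 0 + q 0 1 = 2 * pi * c%:~R)) <-> bad_q q.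
Proof.
split.
  case=> [[a ha] [[b hb] [c hc]]].
  set s := b + c - a.
  have hq0 : q 0 0 = pi * s%:~R.
    rewrite /s !rmorphD !rmorphN /=; lra.
  have hq1 : q 0 1 = q 0 0 + 2 * pi * (a - b)%:~R.
    rewrite !rmorphD !rmorphN /=; lra.
  have hq2 : q 0 2 = q 0 0 + 2 * pi * (a - c)%:~R.
    rewrite !rmorphD !rmorphN /=; lra.
  have hs := divz_eq s 2.
  set t := (s %/ 2)%Z in hs; set r := (s %% 2)%Z in hs.
  have r0 : 0 <= r by rewrite /r modz_ge0.
  have r2 : r < 2 by rewrite /r ltz_pmod.
  have hsR : (s%:~R : R) = t%:~R * 2 + r%:~R by rewrite {1}hs rmorphD rmorphM.
  have [rr|rr] : r = 0 \/ r = 1 by lia.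
  - left; exists (fun i => nth 0 [:: t; t + a - b; t + a - c] i) => i.
    have hq0' : q 0 0 = 2 * pi * t%:~R by rewrite hq0 hsR rr; simpl; lra.
    case: (ord3 i) => [->|[->|->]] /=.
    + exact: hq0'.
    + rewrite hq1 hq0' !rmorphD !rmorphN /=; lra.
    + rewrite hq2 hq0' !rmorphD !rmorphN /=; lra.
  - right; exists (fun i => nth 0 [:: t; t + a - b; t + a - c] i) => i.
    have hq0' : q 0 0 = pi + 2 * pi * t%:~R by rewrite hq0 hsR rr; simpl; lra.
    case: (ord3 i) => [->|[->|->]] /=.
    + exact: hq0'.
    + rewrite hq1 hq0' !rmorphD !rmorphN /=; lra.
    + rewrite hq2 hq0' !rmorphD !rmorphN /=; lra.
case=> [[z hz]|[z hz]].
  split; first by exists (z 1 + z 2); rewrite !hz rmorphD /=; lra.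
  split; first by exists (z 0 + z 2); rewrite !hz rmorphD /=; lra.
  by exists (z 0 + z 1); rewrite !hz rmorphD /=; lra.
split; first by exists (1 + z 1 + z 2); rewrite !hz !rmorphD /=; lra.
split; first by exists (1 + z 0 + z 2); rewrite !hz !rmorphD /=; lra.
by exists (1 + z 0 + z 1); rewrite !hz !rmorphD /=; lra.
Qed.

Lemma bad_part (R : realType) (q : 'rV[R]_3) : Dvec q != 0 <-> ~ bad_q q.
Proof.
have key : Dvec q = 0 <-> bad_q q.
  rewrite Dzero_cos -int_part !cos1P; tauto.
split.
  by move=> nz /key D0; rewrite D0 eqxx in nz.
by move=> nb; apply/eqP => /key.
Qed.




Lemma cnz (R : realType) (z : R[i]) : z != 0 -> cRe z != 0 \/ cIm z != 0.
Proof.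
case: z => a b /= nz; case: (eqVneq a 0) => [a0|]; last by left.
right; apply: contra nz => /eqP b0; by rewrite a0 b0.
Qed.

Theorem mainTheorem2 (R : realType)
  (lam : 'I_3 -> 'I_3 -> 'I_3 -> 'I_3 -> R)
  (lam_sym1 : forall i j k l, lam i j k l = lam j i k l)
  (lam_sym2 : forall i j k l, lam i j k l = lam i j l k)
  (lam_sym3 : forall i j k l, lam i j k l = lam k l i j)
  (lam_pos : forall xi : 'M[R]_3, xi^T = xi -> xi != 0 ->
     0 < \sum_(i < 3) \sum_(j < 3) \sum_(k < 3) \sum_(l < 3)
           xi i j * lam i j k l * xi k l)
  (q : 'rV[R]_3) :
  (forall j k, Mmat lam q j k \is Num.real) /\
  (Mmat lam q)^T = Mmat lam q /\
  psd_mx (Mmat lam q) /\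
  (pd_mx (Mmat lam q) <-> Dvec q != 0) /\
  (pd_mx (Mmat lam q) -> Mmat lam q \in unitmx) /\
  (Dvec q != 0 <-> ~ bad_q q).
Proof.
have Pge := P_ge0 lam_sym1 lam_sym2 lam_pos.
have qM := qform_M lam_sym1 lam_sym2 lam_sym3 q.
split; first by move=> j k; apply/complex_realP; exists (mm lam q j k); rewrite Mmat_E.
split; first by apply/matrixP => j k; rewrite mxE !Mmat_E (mm_sym lam_sym1 lam_sym2 lam_sym3).
split.
  move=> v; rewrite qM lecE /= eqxx /= !Qm_P.
  have := (Pge (aD q) (fun j => cRe (v j 0))).1.
  have := (Pge (bD q) (fun j => cRe (v j 0))).1.
  have := (Pge (aD q) (fun j => cIm (v j 0))).1.
  have := (Pge (bD q) (fun j => cIm (v j 0))).1.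
  lra.
split; last split; last exact: bad_part.
  split.
    move=> pd; apply/negP => /eqP D0.
    have v0 : (const_mx 1 : 'cV[R[i]]_3) != 0.
      by apply/eqP => /matrixP /(_ 0 0); rewrite !mxE => /eqP; rewrite oner_eq0.
    have := pd _ v0; rewrite qform_E big1 ?ltxx // => j _; rewrite big1 // => k _.
    have a0 : forall i, aD q i = 0 by move=> i; rewrite /aD D0 mxE.
    have b0 : forall i, bD q i = 0 by move=> i; rewrite /bD D0 mxE.
    have m0 : mm lam q j k = 0.
      rewrite /mm big1 // => i _; rewrite big1 // => l _; rewrite a0 b0; ring.
    rewrite Mmat_E m0.
    have -> : ((0 : R)%:C)%C = 0 :> R[i] by [].
    by rewrite mulr0 mul0r.
  move=> Dnz v vnz; rewrite qM ltcE /= eqxx /= !Qm_P.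
  have [i Di] : exists i, Dvec q 0 i != 0.
    apply/existsP; apply: contraR Dnz; rewrite negb_exists => /forallP h.
    by apply/eqP/matrixP => a b; rewrite (ord1 a) [RHS]mxE; apply/eqP; rewrite -[_ == _]negbK h.
  have [j vj] : exists j, v j 0 != 0.
    apply/existsP; apply: contraR vnz; rewrite negb_exists => /forallP h.
    by apply/eqP/matrixP => a b; rewrite (ord1 b) [RHS]mxE; apply/eqP; rewrite -[_ == _]negbK h.
  have := (Pge (aD q) (fun j => cRe (v j 0))).1.
  have := (Pge (bD q) (fun j => cRe (v j 0))).1.
  have := (Pge (aD q) (fun j => cIm (v j 0))).1.
  have := (Pge (bD q) (fun j => cIm (v j 0))).1.
  case: (cnz Di) => Dn; case: (cnz vj) => vn.
  - have := (Pge (aD q) (fun j => cRe (v j 0))).2 (ex_intro _ i Dn) (ex_intro _ j vn); lra.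
  - have := (Pge (aD q) (fun j => cIm (v j 0))).2 (ex_intro _ i Dn) (ex_intro _ j vn); lra.
  - have := (Pge (bD q) (fun j => cRe (v j 0))).2 (ex_intro _ i Dn) (ex_intro _ j vn); lra.
  - have := (Pge (bD q) (fun j => cIm (v j 0))).2 (ex_intro _ i Dn) (ex_intro _ j vn); lra.
move=> pd; rewrite unitmxE unitfE; apply/negP => /det0P [w wnz wA].
set v := map_mx (@conjc R) w^T.
have hv : (map_mx (@conjc R) v)^T = w by apply/matrixP => a b; rewrite !mxE conjcK.
have vnz : v != 0.
  apply: contra wnz => /eqP v0; apply/eqP; rewrite -hv v0.
  by apply/matrixP => a b; rewrite !mxE conjc0.
by have := pd _ vnz; rewrite /qform hv wA mul0mx mxE ltxx.
Qed.
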